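(* Let $\mu$ be a positive real with $\mu\le\frac{1}{225}$. Let $G$ be an $n$-vertex graph of minimum degree at least $15\sqrt{\mu}\,n$, and let $\mathcal{F}$ be a $\mu n$-bounded incompatibility system over $G$. Suppose $P=(v_0,v_1,\dots,v_\ell)$ is a smooth path in $G$ such that there is no vertex $w\notin V(P)$ for which $(w,v_0,\dots,v_\ell)$ is a smooth path. Then there exists a subset $X$ of the set of good neighbors of $v_0$ in $P$ with $|X|\ge d(v_0)-14\sqrt{\mu}\,n$ such that for every $v_i\in X$ the path $(v_{i-1},\dots,v_1,v_0,v_i,v_{i+1},\dots,v_\ell)$ is smooth.
   Context: All graphs are finite and simple; $d(v)$ is the degree of $v$. An incompatibility system $\mathcal{F}$ over $G=(V,E)$ is a family $\{F_v\}_{v\in V}$ where each $F_v$ is a set of unordered pairs $\{e,e'\}$ of distinct edges with $e\cap e'=\{v\}$; edges $e,e'$ are incompatible if $\{e,e'\}\in F_v$ for some $v$, compatible otherwise. A subgraph (path, cycle) is compatible with $\mathcal{F}$ if every pair of its edges is compatible. For a positive real $\Delta$, $\mathcal{F}$ is $\Delta$-bounded if for every vertex $v$ and edge $e\ni v$, at most $\Delta$ other edges $e'\ni v$ satisfy $\{e,e'\}\in F_v$. For a path $P=(v_0,\dots,v_\ell)$, $|P|$ is its number of vertices. For a vertex $w$, a vertex $v_i\in V(P)$ adjacent to $w$ is a bad neighbor of $w$ in $P$ if $\{w,v_i\}$ is incompatible with $\{v_i,v_{i-1}\}$ or with $\{v_i,v_{i+1}\}$ (for those of these that are edges of $P$),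 and a good neighbor otherwise. For $\gamma>0$, $w$ is $\gamma$-bad for $P$ if it has at least $\gamma|P|$ bad neighbors in $P$, and $\gamma$-good otherwise. Two vertices $v_1,v_2$ are $\gamma$-correlated if there are at least $\gamma n$ vertices $w$ such that $\{v_1,w\}$ and $\{v_2,w\}$ are incompatible edges; otherwise $\gamma$-uncorrelated. For an $n$-vertex graph with a $\mu n$-bounded system $\mathcal{F}$, a path $P=(v_0,\dots,v_\ell)$ is smooth (smoothly compatible with $\mathcal{F}$) if (i) $P$ is compatible with $\mathcal{F}$, (ii) both $v_0$ and $v_\ell$ are $8\sqrt{\mu}$-good for $P$, and (iii) $v_0$ and $v_\ell$ are $\sqrt{\mu}$-uncorrelated. *)

(* Defs.v *)
From mathcomp Require Import all_boot all_order all_algebra.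
Set Implicit Arguments. Unset Strict Implicit. Unset Printing Implicit Defensive.
Import Order.TTheory GRing.Theory Num.Theory.
Local Open Scope ring_scope.

Section Defs.
Variables (T : finType) (e : rel T).

Definition simple_graph := symmetric e /\ irreflexive e.

Definition deg (v : T) : nat := #|[set u | e v u]|.

(* An incompatibility system is encoded by inc : T -> T -> T -> bool, where
   inc v a b means the pair {{v,a},{v,b}} belongs to F_v. *)
Definition incsys (inc : T -> T -> T -> bool) :=
  (forall v a b, inc v a b -> [&& e v a, e v b & a != b]) /\
  (forall v a b, inc v a b = inc v b a).

Variable inc : T -> T -> T -> bool.

Definition same_edge (a b c d : T) : bool :=
  ((a == c) && (b == d)) || ((a == d) && (b == c)).

Definition edge_incomp (a b c d : T) : bool :=
  [exists v, exists x, exists y,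
     [&& inc v x y, same_edge v x a b & same_edge v y c d]].

Definition bounded {R : numDomainType} (Delta : R) :=
  forall v a, e v a -> (#|[set b | inc v a b]|%:R <= Delta).

Definition is_gpath (p : seq T) : bool :=
  match p with [::] => false | x :: s => path e x s && uniq p end.

Definition compatible_path (p : seq T) : Prop :=
  forall x0 (i j : nat), (i.+1 < size p)%N -> (j.+1 < size p)%N ->
    ~~ edge_incomp (nth x0 p i) (nth x0 p i.+1) (nth x0 p j) (nth x0 p j.+1).

Definition is_bad_nb (p : seq T) (w x : T) : bool :=
  let i := index x p in
  [&& x \in p, e w x &
    ((0 < i)%N && edge_incomp w x x (nth x p i.-1))
    || ((i.+1 < size p)%N && edge_incomp w x x (nth x p i.+1))].

Definition is_good_nb (p : seq T) (w x : T) : bool :=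
  [&& x \in p, e w x & ~~ is_bad_nb p w x].

Definition bad_nbrs (p : seq T) (w : T) : {set T} := [set x | is_bad_nb p w x].
Definition good_nbrs (p : seq T) (w : T) : {set T} := [set x | is_good_nb p w x].

Definition gamma_bad {R : numDomainType} (gamma : R) (p : seq T) (w : T) : bool :=
  gamma * (size p)%:R <= #|bad_nbrs p w|%:R.
Definition gamma_good {R : numDomainType} (gamma : R) (p : seq T) (w : T) : bool :=
  ~~ gamma_bad gamma p w.

Definition gamma_correlated {R : numDomainType} (gamma : R) (v1 v2 : T) : bool :=
  gamma * #|T|%:R <= #|[set w | edge_incomp v1 w v2 w]|%:R.
Definition gamma_uncorrelated {R : numDomainType} (gamma : R) (v1 v2 : T) : bool :=
  ~~ gamma_correlated gamma v1 v2.

Definition smooth {R : rcfType} (mu : R) (p : seq T) : Prop :=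
  is_gpath p /\ compatible_path p /\
  (forall x0, let v0 := head x0 p in let vl := last x0 p in
     [/\ gamma_good (8 * Num.sqrt mu) p v0,
         gamma_good (8 * Num.sqrt mu) p vl &
         gamma_uncorrelated (Num.sqrt mu) v0 vl]).

Definition reroute (p : seq T) (x : T) : seq T :=
  rev (take (index x p) p) ++ drop (index x p) p.

End Defs.

(* Main.v *)
Require Import Defs.
From mathcomp Require Import all_boot all_order all_algebra.
From mathcomp Require Import zify ring lra.
Import Order.TTheory GRing.Theory Num.Theory.
Set Implicit Arguments. Unset Strict Implicit. Unset Printing Implicit Defensive.



Lemma se_sw1 (T : finType) (a b c d : T) : same_edge a b c d = same_edge b a c d.
Proof. rewrite /same_edge; by case: (a =P c); case: (a =P d); case: (b =P c); case: (b =P d). Qed.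
Lemma se_sw2 (T : finType) (a b c d : T) : same_edge a b c d = same_edge a b d c.
Proof. rewrite /same_edge; by case: (a =P c); case: (a =P d); case: (b =P c); case: (b =P d). Qed.
Lemma se_sym (T : finType) (a b c d : T) : same_edge a b c d = same_edge c d a b.
Proof. rewrite /same_edge; apply/idP/idP => /orP[]/andP[/eqP-> /eqP->]; by rewrite !eqxx ?orbT. Qed.
Lemma se_refl (T : finType) (a b : T) : same_edge a b a b.
Proof. by rewrite /same_edge !eqxx. Qed.
Lemma se_E (T : finType) (a b c d : T) : same_edge a b c d -> (a = c /\ b = d) \/ (a = d /\ b = c).
Proof. by rewrite /same_edge => /orP[/andP[/eqP-> /eqP->]|/andP[/eqP-> /eqP->]]; [left|right]. Qed.

Lemma ei_sw1 (T : finType) inc (a b c d : T) :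
  edge_incomp inc a b c d = edge_incomp inc b a c d.
Proof.
rewrite /edge_incomp; apply/existsP/existsP => -[v /existsP[x /existsP[y H]]];
exists v; apply/existsP; exists x; apply/existsP; exists y; by rewrite se_sw2.
Qed.
Lemma ei_sw2 (T : finType) inc (a b c d : T) :
  edge_incomp inc a b c d = edge_incomp inc a b d c.
Proof.
rewrite /edge_incomp; apply/existsP/existsP => -[v /existsP[x /existsP[y H]]];
exists v; apply/existsP; exists x; apply/existsP; exists y;
 by move: H; rewrite (se_sw2 v y).
Qed.

Lemma inc_props (T : finType) (e : rel T) inc v a b :
  simple_graph e -> incsys e inc -> inc v a b ->
  [/\ e v a, e v b, a != b, v != a & v != b].
Proof.
move=> [es ei] [ie _] /ie /and3P[h1 h2 h3]; split => //.
  by apply/eqP => E; move: h1; rewrite E ei.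
by apply/eqP => E; move: h2; rewrite E ei.
Qed.

Lemma eiE (T : finType) (e : rel T) inc (w x y : T) :
  simple_graph e -> incsys e inc -> edge_incomp inc w x x y = inc x w y.
Proof.
move=> sg isy; apply/idP/idP.
  move=> /existsP[v /existsP[a /existsP[b /and3P[H s1 s2]]]].
  have [_ _ nab nva nvb] := inc_props sg isy H.
  move/se_E: s1 => [[E1 E2]|[E1 E2]]; move/se_E: s2 => [[F1 F2]|[F1 F2]];
    subst => //; try by rewrite eqxx in nva nab nvb.
move=> H; apply/existsP; exists x; apply/existsP; exists w; apply/existsP; exists y.
by rewrite H /same_edge !eqxx ?orbT.
Qed.

Lemma ei_inc (T : finType) inc (a b c d : T) :
  edge_incomp inc a b c d <->
  exists v x y, [/\ inc v x y, same_edge v x a b & same_edge v y c d].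
Proof.
split.
  by move=> /existsP[v /existsP[x /existsP[y /and3P[H s1 s2]]]]; exists v, x, y.
move=> [v [x [y [H s1 s2]]]]; apply/existsP; exists v; apply/existsP; exists x;
 apply/existsP; exists y; by rewrite H s1 s2.
Qed.

Fixpoint padj (T : finType) (s : seq T) (x y : T) : bool :=
  match s with
  | a :: ((b :: _) as s') => same_edge a b x y || padj s' x y
  | _ => false
  end.

Lemma padj_cons2 (T : finType) (a b : T) s x y :
  padj [:: a, b & s] x y = same_edge a b x y || padj (b :: s) x y.
Proof. by []. Qed.

Lemma padj_sym (T : finType) (s : seq T) x y : padj s x y = padj s y x.
Proof.
elim: s => [|a [|b s] IH] //. by rewrite !padj_cons2 IH se_sw2.
Qed.

Lemma padj_mem (T : finType) (s : seq T) x y : padj s x y -> (x \in s) && (y \in s).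
Proof.
elim: s => [|a [|b s] IH] //; rewrite padj_cons2 => /orP[/se_E [[<- <-]|[<- <-]]|/IH].
- by rewrite !inE !eqxx ?orbT.
- by rewrite !inE !eqxx ?orbT.
by rewrite !inE => /andP[-> ->]; rewrite !orbT.
Qed.

Lemma padj_nth (T : finType) (x0 : T) (s : seq T) x y :
  padj s x y <-> exists i, (i.+1 < size s)%N /\ same_edge (nth x0 s i) (nth x0 s i.+1) x y.
Proof.
elim: s => [|a [|b s] IH]; first by split => // -[i []].
  by split => // -[i []].
rewrite padj_cons2; split.
  move=> /orP[H|/IH[i [Hi H]]]; first by exists 0%N.
  by exists i.+1.
move=> [[|i] [Hi H]]; first by rewrite H.
by apply/orP; right; apply/IH; exists i.
Qed.

Lemma padj_cat (T : finType) (z : T) (s1 s2 : seq T) b x y : s1 != [::] ->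
  padj (s1 ++ b :: s2) x y = [|| padj s1 x y, padj (b :: s2) x y | same_edge (last z s1) b x y].
Proof.
case: s1 => // a s1 _; change (last z (a :: s1)) with (last a s1).
elim: s1 a => [|c s1 IH] a.
  by rewrite [_ ++ _]/= padj_cons2 orbC.
rewrite [_ ++ _]/= !padj_cons2 -cat_cons IH /=.
by case: (same_edge a c x y).
Qed.

Lemma padj_rev (T : finType) (s : seq T) x y : padj (rev s) x y = padj s x y.
Proof.
elim: s => [|a s IH] //; case: s IH => [|b s] IH; first by [].
have ne : rev (b :: s) != [::] by rewrite rev_cons; case: (rev s).
rewrite rev_cons -cats1 (padj_cat a) // IH.
have -> : padj [:: a] x y = false by [].
rewrite rev_cons last_rcons padj_cons2 (se_sw1 b).
by case: (same_edge a b x y); case: (padj (b :: s) x y).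
Qed.

Lemma path_padj (T : finType) (e : rel T) (x : T) s : symmetric e ->
  path e x s <-> (forall a b, padj (x :: s) a b -> e a b).
Proof.
move=> es; elim: s x => [|b s IH] x; first by [].
have -> : path e x (b :: s) = e x b && path e b s by [].
split.
  move=> /andP[exb /IH H] a c; rewrite padj_cons2 => /orP[/se_E[[<- <-]|[<- <-]]|/H] //.
  by rewrite es.
move=> H; rewrite H ?padj_cons2 ?se_refl //=; apply/IH => a c hac.
by apply: H; rewrite padj_cons2 hac orbT.
Qed.

Lemma compat_padj (T : finType) (e : rel T) inc (s : seq T) :
  simple_graph e -> incsys e inc ->
  compatible_path inc s <-> (forall v a b, padj s v a -> padj s v b -> ~~ inc v a b).
Proof.
move=> sg isy; split.
  move=> C v a b /(padj_nth v) [i [Hi Hsi]] /(padj_nth v) [j [Hj Hsj]].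
  apply/negP => H; move/negP: (C v i j Hi Hj); apply; apply/ei_inc; exists v, a, b.
  by rewrite H -se_sym Hsi -se_sym Hsj.
move=> C x0 i j Hi Hj; apply/negP => /ei_inc [v [a [b [H s1 s2]]]].
have pa : padj s v a by apply/(padj_nth x0); exists i; rewrite se_sym.
have pb : padj s v b by apply/(padj_nth x0); exists j; rewrite se_sym.
by move: (C v a b pa pb); rewrite H.
Qed.

Lemma bad_padj (T : finType) (e : rel T) inc (s : seq T) w x :
  simple_graph e -> incsys e inc -> uniq s ->
  is_bad_nb e inc s w x = [&& x \in s, e w x & [exists y, padj s x y && inc x w y]].
Proof.
move=> sg isy us; rewrite /is_bad_nb; case xs: (x \in s) => //=.
case: (e w x) => //=; rewrite !(eiE _ _ _ sg isy).
have nx := nth_index x xs; have ix := index_mem x s; rewrite xs in ix.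
apply/idP/existsP.
  move=> /orP[/andP[i0 H]|/andP[i1 H]].
    exists (nth x s (index x s).-1); rewrite H andbT; apply/(padj_nth x).
    exists (index x s).-1; rewrite prednK // nx ix; split => //.
    by rewrite se_sw1 se_refl.
  exists (nth x s (index x s).+1); rewrite H andbT; apply/(padj_nth x).
  by exists (index x s); rewrite nx i1 se_refl.
move=> [y /andP[/(padj_nth x)[j [Hj /se_E [[E1 E2]|[E1 E2]]]] H]].
  have ij : index x s = j by rewrite -E1 index_uniq // ltnW.
  by rewrite ij Hj E2 H orbT.
have ij : index x s = j.+1 by rewrite -E2 index_uniq.
by rewrite ij /= E1 H.
Qed.

Lemma padj_head (T : finType) (v0 : T) s y : v0 \notin s ->
  padj (v0 :: s) v0 y -> y = head v0 s.
Proof.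
case: s => [|b s] //= nv; rewrite -/(padj (b :: s) v0 y).
move=> /orP[/se_E[[_ ->]|[E1 E2]]|/padj_mem/andP[H _]] //.
- by move: nv; rewrite E2 inE eqxx.
- by move: nv; rewrite H.
Qed.

Lemma bad_sub (T : finType) (e : rel T) inc (s s' : seq T) a c w :
  simple_graph e -> incsys e inc -> uniq s -> uniq s' ->
  (forall x y, padj s' x y -> padj s x y || same_edge a c x y) ->
  bad_nbrs e inc s' w \subset
    bad_nbrs e inc s w :|: [set z | ((z == a) && inc a w c) || ((z == c) && inc c w a)].
Proof.
move=> sg isy us us' Hs; apply/subsetP => z; rewrite !inE !bad_padj //.
move=> /and3P[zs wz /existsP[y /andP[/Hs /orP[pz|/se_E[[<- <-]|[<- <-]]] H]]].
- have /andP[zs' _] := padj_mem pz.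
  by rewrite zs' wz /=; apply/orP; left; apply/existsP; exists y; rewrite pz H.
- by rewrite H eqxx !orbT.
- by rewrite H eqxx !orbT.
Qed.

Lemma compat_add (T : finType) (e : rel T) inc (s s' : seq T) a c :
  simple_graph e -> incsys e inc ->
  (forall x y, padj s' x y -> padj s x y || same_edge a c x y) ->
  (forall v x y, padj s v x -> padj s v y -> ~~ inc v x y) ->
  (forall y, padj s a y -> ~~ inc a c y) -> (forall y, padj s c y -> ~~ inc c a y) ->
  (forall v x y, padj s' v x -> padj s' v y -> ~~ inc v x y).
Proof.
move=> sg [ie isym] Hs C Ha Hc.
have key : forall v x y, padj s v x || same_edge a c v x -> padj s v y -> ~~ inc v x y.
  move=> v x y /orP[h1|/se_E[[<- <-]|[<- <-]]] h2; [exact: C|exact: Ha|exact: Hc].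
move=> v x y /Hs h1 /Hs /orP[h2|h2]; first exact: key.
move/orP: h1 => [h1|h1]; first by rewrite isym; apply: key => //; rewrite h2 orbT.
apply/negP => H; have [_ _ nxy nvx nvy] := inc_props sg (conj ie isym) H.
move/se_E: h1 => [[E1 E2]|[E1 E2]]; move/se_E: h2 => [[F1 F2]|[F1 F2]]; subst;
  by rewrite ?eqxx in nxy nvx nvy.
Qed.

Lemma card_sum (T : finType) (P : pred T) : #|[set z | P z]| = (\sum_z P z)%N.
Proof.
rewrite -sum1_card big_mkcond /=; apply: eq_bigr => z _; rewrite inE; by case: (P z).
Qed.

Local Open Scope ring_scope.

Lemma heavy_count (R : realFieldType) (T : finType) (P : T -> T -> bool) (S : {set T}) (B c : R) :
  0 < c -> (forall w z, P w z -> z \in S) -> (forall z, #|[set w | P w z]|%:R <= B) ->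
  #|[set w | c <= #|[set z | P w z]|%:R]|%:R * c <= #|S|%:R * B.
Proof.
move=> c0 HS HB.
have E : (\sum_w #|[set z | P w z]| = \sum_z #|[set w | P w z]|)%N.
  under eq_bigr do rewrite card_sum.
  rewrite exchange_big /=; apply: eq_bigr => z _; by rewrite card_sum.
set H := [set w | _].
apply: (@le_trans _ _ (\sum_(w in H) (#|[set z | P w z]|%:R : R))).
  rewrite mulrC mulr_natr -sumr_const; apply: ler_sum => w; by rewrite inE.
apply: (@le_trans _ _ (\sum_w (#|[set z | P w z]|%:R : R))).
  rewrite [X in _ <= X](bigID (fun w => w \in H)) /= lerDl; apply: sumr_ge0 => *; exact: ler0n.
rewrite -natr_sum E natr_sum (bigID (fun z => z \in S)) /=.
rewrite [X in _ + X]big1 ?addr0; last first.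
  move=> z zS; have -> : [set w | P w z] = set0.
    by apply/setP => w; rewrite !inE; apply/negP => /HS; rewrite (negbTE zS).
  by rewrite cards0.
rewrite mulrC mulr_natr -sumr_const; apply: ler_sum => z _; exact: HB.
Qed.

Lemma card_preimI (T : finType) (A S : {set T}) (f : T -> T) :
  {in A &, injective f} -> (#|[set x in A | f x \in S]| <= #|S|)%N.
Proof.
move=> inj; rewrite -(@card_in_imset _ _ f); last first.
  by move=> x y; rewrite !inE => /andP[xa _] /andP[ya _]; apply: inj.
apply: subset_leq_card; apply/subsetP => y /imsetP[x]; rewrite inE => /andP[_ h] ->.
exact: h.
Qed.

Lemma bnd_card (R : realFieldType) (T : finType) (e : rel T) inc (D : R) v a :
  incsys e inc -> bounded e inc D -> 0 <= D -> #|[set b | inc v a b]|%:R <= D.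
Proof.
move=> [ie _] bd D0; case eva: (e v a); first exact: bd.
have -> : [set b | inc v a b] = set0.
  apply/setP => b; rewrite !inE; apply/negP => /ie; by rewrite eva.
by rewrite cards0.
Qed.

Lemma corr_count (R : realFieldType) (T : finType) (e : rel T) inc (s D : R) vl :
  simple_graph e -> incsys e inc -> bounded e inc D -> 0 <= D -> 0 < s * #|T|%:R ->
  #|[set w | gamma_correlated inc s w vl]|%:R * (s * #|T|%:R) <= #|T|%:R * D.
Proof.
move=> sg isy bd D0 c0.
have := @heavy_count R T (fun w u => edge_incomp inc w u vl u) [set: T] D (s * #|T|%:R) c0.
rewrite cardsT; apply => // z.
apply: le_trans (bnd_card z vl isy bd D0); rewrite ler_nat; apply: subset_leq_card.
apply/subsetP => w; rewrite !inE ei_sw2 (eiE _ _ _ sg isy) (isy.2 z w); done.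
Qed.

Lemma bad_col (R : realFieldType) (T : finType) (e : rel T) inc (D : R) p z :
  simple_graph e -> incsys e inc -> bounded e inc D -> 0 <= D ->
  #|[set w | is_bad_nb e inc p w z]|%:R <= 2%:R * D.
Proof.
move=> sg isy bd D0.
set y1 := nth z p (index z p).-1; set y2 := nth z p (index z p).+1.
have sub : [set w | is_bad_nb e inc p w z] \subset [set w | inc z y1 w] :|: [set w | inc z y2 w].
  apply/subsetP => w; rewrite !inE /is_bad_nb !(eiE _ _ _ sg isy) -/y1 -/y2 (isy.2 z y1) (isy.2 z y2).
  by move=> /and3P[_ _ /orP[/andP[_ ->]|/andP[_ ->]]]; rewrite ?orbT.
apply: le_trans (_ : (#|[set w | inc z y1 w]| + #|[set w | inc z y2 w]|)%:R <= _).
  by rewrite ler_nat; apply: leq_trans (subset_leq_card sub) (leq_card_setU _ _).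
by rewrite natrD mulr2n mulrDl mul1r lerD // (bnd_card _ _ isy bd D0).
Qed.

Lemma gpath_padj (T : finType) (e : rel T) (s : seq T) : symmetric e ->
  is_gpath e s -> forall a b, padj s a b -> e a b.
Proof. by case: s => [|x s] // es /andP[/(path_padj x s es) H _]. Qed.

Lemma padj_gpath (T : finType) (e : rel T) (s : seq T) : symmetric e ->
  s != [::] -> uniq s -> (forall a b, padj s a b -> e a b) -> is_gpath e s.
Proof. by case: s => [|x s] // es _ us H; rewrite /is_gpath us andbT; apply/path_padj. Qed.

Lemma card_bad_le (T : finType) (A B : {set T}) (a c : T) (ba bc : bool) :
  A \subset B :|: [set z | ((z == a) && ba) || ((z == c) && bc)] -> ~~ bc ->
  (#|A| <= #|B| + ba)%N.
Proof.
move=> sub nbc; apply: leq_trans (subset_leq_card sub) _.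
apply: leq_trans (leq_card_setU _ _) _; rewrite leq_add2l.
clear sub; case: ba.
  apply: leq_trans (_ : #|[set a]| <= 1)%N; last by rewrite cards1.
  apply: subset_leq_card; apply/subsetP => z; rewrite !inE (negbTE nbc) andbF orbF andbT; done.
rewrite leqn0 cards_eq0; apply/eqP/setP => z; rewrite !inE (negbTE nbc) !andbF; done.
Qed.

Lemma head_rev (T : Type) (x0 : T) s : head x0 (rev s) = last x0 s.
Proof. by elim/last_ind: s => [|s a _] //; rewrite rev_rcons last_rcons. Qed.
Lemma last_rev (T : Type) (x0 : T) s : last x0 (rev s) = head x0 s.
Proof. by case: s => [|a s] //; rewrite rev_cons last_rcons. Qed.

Lemma reroute_props (T : finType) (p : seq T) v0 p' x : p = v0 :: p' -> uniq p ->
  x \in p -> x != v0 ->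
  [/\ perm_eq (reroute p x) p,
      (forall a b, padj (reroute p x) a b -> padj p a b || same_edge v0 x a b),
      padj p (nth v0 p (index x p).-1) x,
      forall y, head y (reroute p x) = nth v0 p (index x p).-1
    & forall y, last y (reroute p x) = last v0 p].
Proof.
move=> Ep up xp xv0.
set i := index x p.
have i0 : (0 < i)%N by rewrite lt0n; apply/negP => /eqP i0; move: xv0;
  rewrite -(nth_index v0 xp) -/i i0 Ep /= eqxx.
have isz : (i < size p)%N by rewrite index_mem.
set t := take i p; set d' := drop i.+1 p.
have Ed : drop i p = x :: d' by rewrite (drop_nth v0 isz) nth_index.
have Ept : p = t ++ x :: d' by rewrite -Ed cat_take_drop.
have szt : size t = i by rewrite size_take isz.
have tne : t != [::] by apply/eqP => E; move: szt; rewrite E /= => E'; move: i0; rewrite -E'.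
have ht : head v0 t = v0 by rewrite /t Ep -(prednK i0).
have lt : last v0 t = nth v0 p i.-1.
  by rewrite -nth_last szt /t nth_take // prednK.
have Eq : reroute p x = rev t ++ x :: d' by rewrite /reroute -/i -Ed.
have rtne : rev t != [::] by move: tne; case: (t) => // a s; rewrite rev_cons; case: (rev s).
split.
- by rewrite Eq [X in perm_eq _ X]Ept perm_cat2r perm_rev.
- move=> a b; rewrite Eq (padj_cat v0) // padj_rev last_rev ht Ept (padj_cat v0) //.
  by case/or3P => ->; rewrite ?orbT.
- by rewrite {1}Ept (padj_cat v0) // lt se_refl !orbT.
- by move=> y; rewrite Eq; case E: (rev t) rtne => [|a s] //= _; rewrite -lt -head_rev E.
- by move=> y; rewrite Eq [in RHS]Ept !last_cat.
Qed.

Lemma card_U5 (T : finType) (A B C D E : {set T}) :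
  (#|A :|: B :|: C :|: D :|: E| <= #|A| + #|B| + #|C| + #|D| + #|E|)%N.
Proof.
apply: leq_trans (leq_card_setU _ _) _; rewrite leq_add2r.
apply: leq_trans (leq_card_setU _ _) _; rewrite leq_add2r.
apply: leq_trans (leq_card_setU _ _) _; rewrite leq_add2r.
exact: leq_card_setU.
Qed.

Local Open Scope ring_scope.
Unset Implicit Arguments.

Theorem lemma2p5 (R : rcfType) (T : finType) (e : rel T)
    (inc : T -> T -> T -> bool) (mu : R) (p : seq T) (v0 : T) :
  simple_graph e ->
  0 < mu -> mu <= 1 / 225%:R ->
  (forall v, 15%:R * Num.sqrt mu * #|T|%:R <= (deg e v)%:R) ->
  incsys e inc ->
  bounded e inc (mu * #|T|%:R) ->
  smooth e inc mu p ->
  head v0 p = v0 ->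
  (forall w, w \notin p -> ~ smooth e inc mu (w :: p)) ->
  exists X : {set T},
    [/\ X \subset good_nbrs e inc p v0,
        (deg e v0)%:R - 14%:R * Num.sqrt mu * #|T|%:R <= #|X|%:R &
        forall x, x \in X -> smooth e inc mu (reroute p x)].
Proof.
move=> sg mu0 mule dmin isy bd [gp [cp ends]] hv0 nomax.
have es := sg.1; have eirr := sg.2.
have isym := isy.2.
have [p' Ep] : exists p', p = v0 :: p' by case: p {cp ends nomax} hv0 gp => // a p' /= ->; exists p'.
have up : uniq p by move: gp; rewrite Ep => /andP[].
have v0p' : v0 \notin p' by move: up; rewrite Ep => /andP[].
have v0p : v0 \in p by rewrite Ep mem_head.
set n := (#|T|%:R : R).
set s := Num.sqrt mu.
set L := ((size p)%:R : R).
set vl := last v0 p.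
set v1 := head v0 p'.
have n0 : 0 < n by rewrite ltr0n; apply/card_gt0P; exists v0.
have s0 : 0 < s by rewrite sqrtr_gt0.
have mus : mu = s * s by rewrite /s -expr2 sqr_sqrtr // ltW.
have s15 : s <= 1 / 15%:R by move: mule; rewrite mus; nra.
have L1 : 1 <= L by rewrite /L ler1n Ep.
have Ln : L <= n by rewrite /L /n ler_nat -(card_uniqP up) max_card.
have D0 : 0 <= mu * n by rewrite mulr_ge0 // ltW.
have [g0 gl unc] := ends v0; rewrite hv0 -/vl -/s -/n -/L in g0 gl unc.
set bad := fun (q : seq T) (w : T) => (#|bad_nbrs e inc q w|%:R : R).
set H := [set u | 7%:R * s * L <= bad p u].
set Cl := [set w | gamma_correlated inc s w vl].
set I1 := [set b | inc v0 v1 b].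
set I2 := [set b | inc v0 vl b].
set C0 := [set w | edge_incomp inc v0 w vl w].
have cH : #|H|%:R * (7%:R * s * L) <= L * (2%:R * (mu * n)).
  have c0 : 0 < 7%:R * s * L by rewrite !mulr_gt0 // (lt_le_trans ltr01).
  have := @heavy_count R T (fun w z => is_bad_nb e inc p w z) [set z | z \in p]
    (2%:R * (mu * n)) _ c0.
  have Sp : #|[set z | z \in p]| = size p by rewrite cardsE (card_uniqP up).
  rewrite Sp; apply.
    by move=> w z; rewrite inE => /and3P[].
  by move=> z; apply: bad_col.
have cCl : #|Cl|%:R * (s * n) <= n * (mu * n).
  by apply: (@corr_count R T e inc s (mu * n) vl sg isy bd D0); rewrite mulr_gt0.
have cI1 : #|I1|%:R <= mu * n by exact: (bnd_card v0 v1 isy bd D0).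
have cI2 : #|I2|%:R <= mu * n by exact: (bnd_card v0 vl isy bd D0).
have cC0 : #|C0|%:R < s * n by move: unc; rewrite /gamma_uncorrelated /gamma_correlated -ltNge.
have C0E : forall w, (w \in C0) = inc w vl v0.
  by move=> w; rewrite inE ei_sw2 (eiE _ _ _ sg isy) isym.
have cpp := (compat_padj _ sg isy).1 cp.
set Nout := [set w | e v0 w && (w \notin p)].
have Nsub : Nout \subset I1 :|: H :|: I2 :|: C0 :|: Cl.
  apply/subsetP => w; rewrite inE => /andP[ew wp].
  apply/negPn/negP; rewrite !in_setU => /norP[/norP[/norP[/norP[nI1 nH] nI2] nC0] nCl].
  apply: (nomax w wp).
  have gw : is_gpath e (w :: p).
    move: gp wp; rewrite Ep /is_gpath /= => /andP[-> ->] ->; rewrite es ew; done.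
  have uw : uniq (w :: p) by move: gw; rewrite Ep /is_gpath => /andP[].
  have pw : forall x y, padj (w :: p) x y -> padj p x y || same_edge v0 w x y.
    by move=> x y; rewrite Ep padj_cons2 -Ep se_sw1 orbC.
  split => //; split.
    apply/(compat_padj _ sg isy) => v a b; apply: (compat_add sg isy pw cpp).
      move=> y; rewrite Ep => /padj_head -> //; rewrite isym; move: nI1; rewrite inE; done.
    by move=> y /padj_mem /andP[wp' _]; rewrite wp' in wp.
  move=> x0 /=.
  have -> : last w p = vl by rewrite /vl Ep.
  rewrite -/s /gamma_good /gamma_bad -!ltNge /= -addn1 natrD -/L.
  have nii : forall a b, ~~ inc a a b.
    by move=> a b; apply/negP => /(inc_props sg isy) [_ _ _ /eqP].
  have nii2 : forall a b, ~~ inc a b b.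
    by move=> a b; apply/negP => /(inc_props sg isy) [_ _ /eqP].
  split.
  - have := card_bad_le (bad_sub w sg isy up uw pw) (nii w v0).
    rewrite (negbTE (nii2 v0 w)) addn0 -(ler_nat R) => h; apply: le_lt_trans h _.
    move: nH; rewrite inE -ltNge => h; apply: lt_le_trans h _.
    rewrite -/L; nra.
  - have nb : ~~ inc w vl v0 by rewrite -C0E.
    have := card_bad_le (bad_sub vl sg isy up uw pw) nb.
    move: nI2; rewrite inE => /negbTE ->; rewrite addn0 -(ler_nat R) => h.
    apply: le_lt_trans h _.
    move: gl; rewrite /gamma_good /gamma_bad -ltNge => h; apply: lt_le_trans h _.
    rewrite -/L; nra.
  - by move: nCl; rewrite inE.
set G0 := good_nbrs e inc p v0.
set B0 := bad_nbrs e inc p v0.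
set Np := [set u | e v0 u && (u \in p)].
have degE : (deg e v0 <= #|Nout| + #|Np|)%N.
  apply: leq_trans (leq_card_setU _ _); apply: subset_leq_card.
  by apply/subsetP => u; rewrite !inE; case: (e v0 u); case: (u \in p).
have NpL : (#|Np| <= size p)%N.
  rewrite -(card_uniqP up) -cardsE; apply: subset_leq_card.
  by apply/subsetP => u; rewrite !inE => /andP[].
have NpG : (#|Np| <= #|G0| + #|B0|)%N.
  apply: leq_trans (leq_card_setU _ _); apply: subset_leq_card.
  apply/subsetP => u; rewrite !inE /is_good_nb => /andP[-> ->] /=.
  by case: (is_bad_nb e inc p v0 u).
have cNout : (#|Nout| <= #|I1| + #|H| + #|I2| + #|C0| + #|Cl|)%N.
  exact: leq_trans (subset_leq_card Nsub) (card_U5 _ _ _ _ _).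
have cB0 : #|B0|%:R < 8%:R * s * L by move: g0; rewrite /gamma_good /gamma_bad -ltNge.
have cH' : #|H|%:R * 7%:R <= 2%:R * (s * n).
  move: cH; rewrite mus; set h := (#|H|%:R : R) => cH.
  have sL : 0 < s * L by rewrite mulr_gt0 // (lt_le_trans ltr01).
  nra.
have cCl' : #|Cl|%:R <= s * n.
  move: cCl; rewrite mus; set h := (#|Cl|%:R : R) => cCl.
  have sn : 0 < s * n by rewrite mulr_gt0.
  nra.
have dm := dmin v0; rewrite -/s -/n in dm.
move: degE NpL NpG cNout; rewrite -!(ler_nat R) !natrD -/L => degE NpL NpG cNout.
have Lbig : 12%:R * (s * n) <= L.
  have : mu * n <= (s * n) / 15%:R.
    have sn : 0 <= s * n by rewrite mulr_ge0 // ltW.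
    have := ler_wpM2r sn s15; rewrite mus mulrA; lra.
  lra.
set f := fun x => nth v0 p (index x p).-1.
set PH := [set x in G0 | f x \in H].
set PC := [set x in G0 | f x \in Cl].
set X := [set x in G0 | [&& x \notin I1, x \notin I2, x \notin C0, f x \notin H & f x \notin Cl]].
have G0p : forall x, x \in G0 ->
    [/\ x \in p, e v0 x, x != v0, (0 < index x p)%N & ~~ is_bad_nb e inc p v0 x].
  move=> x; rewrite inE /is_good_nb => /and3P[xp ex nb].
  have xv : x != v0 by apply/eqP => E; move: ex; rewrite E eirr.
  split => //; rewrite lt0n; apply/eqP => i0; move: xv.
  by rewrite -(nth_index v0 xp) i0 Ep /= eqxx.
have finj : {in G0 &, injective f}.
  move=> x y /G0p [xp _ _ ix _] /G0p [yp _ _ iy _] E.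
  have hx : index (f x) p = (index x p).-1.
    by rewrite index_uniq // (leq_ltn_trans (leq_pred _)) // index_mem.
  have hy : index (f y) p = (index y p).-1.
    by rewrite index_uniq // (leq_ltn_trans (leq_pred _)) // index_mem.
  have : index x p = index y p.
    by rewrite -(prednK ix) -(prednK iy) -hx -hy E.
  by move=> /(congr1 (nth v0 p)); rewrite !nth_index.
have cG0 : (#|G0| <= #|X| + (#|I1| + #|I2| + #|C0| + #|PH| + #|PC|))%N.
  apply: leq_trans (_ : #|X :|: (I1 :|: I2 :|: C0 :|: PH :|: PC)| <= _)%N.
    apply: subset_leq_card; apply/subsetP => x xG; rewrite !in_setU.
    move: xG; rewrite /X /PH /PC !inE => ->.
    by case: (inc v0 v1 x); case: (inc v0 vl x); case: (edge_incomp inc v0 x vl x);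
      case: (7%:R * s * L <= bad p (f x)); case: (gamma_correlated inc s (f x) vl).
  by apply: leq_trans (leq_card_setU _ _) _; rewrite leq_add2l card_U5.
have cPH : (#|PH| <= #|H|)%N by exact: (@card_preimI T G0 H f finj).
have cPC : (#|PC| <= #|Cl|)%N by exact: (@card_preimI T G0 Cl f finj).
move: cG0 cPH cPC; rewrite -!(ler_nat R) !natrD => cG0 cPH cPC.
exists X; split.
- by apply/subsetP => x; rewrite inE => /andP[].
- have : mu * n <= (s * n) / 15%:R.
    have sn : 0 <= s * n by rewrite mulr_ge0 // ltW.
    have := ler_wpM2r sn s15; rewrite mus mulrA; lra.
  have : s * L <= s * n by rewrite ler_wpM2l // ltW.
  lra.
move=> x; rewrite inE => /andP[xG /and5P[nI1 nI2 nC0 nH nCl]].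
have [xp ex xv ix nb] := G0p x xG.
have [prm pq padjpu hq lq] := reroute_props Ep up xp xv.
set q := reroute p x in prm pq hq lq *.
have uq : uniq q by rewrite (perm_uniq prm).
have szq : size q = size p by rewrite (perm_size prm).
have nbx : forall y, padj p x y -> ~~ inc x v0 y.
  move=> y pxy; apply/negP => H'; move: nb; rewrite (bad_padj v0 x sg isy up) xp ex /=.
  by move/existsP; apply; exists y; rewrite pxy H'.
split; last split.
- apply: padj_gpath => //.
    by rewrite -size_eq0 szq Ep.
  move=> a b /pq /orP[/(gpath_padj es gp) //|/se_E[[<- <-]|[<- <-]]] //.
  by rewrite es.
- apply/(compat_padj _ sg isy) => v a b; apply: (compat_add sg isy pq cpp).
    move=> y; rewrite Ep => /padj_head -> //; rewrite isym; move: nI1; rewrite inE; done.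
  exact: nbx.
move=> x0; rewrite hq lq -/vl -/s /gamma_good /gamma_bad szq -/L -!ltNge.
set u := nth v0 p (index x p).-1.
split.
- have nb' : ~~ inc x u v0 by rewrite isym; apply: nbx; rewrite padj_sym.
  have := card_bad_le (bad_sub u sg isy up uq pq) nb'.
  rewrite -(ler_nat R) natrD => h; apply: le_lt_trans h _.
  move: nH; rewrite inE -ltNge => hu; change (f x) with u in hu; rewrite /bad in hu.
  case iu: (inc v0 u x).
    have m1 : 1 <= mu * n.
      apply: le_trans (bnd_card v0 u isy bd D0); rewrite ler1n; apply/card_gt0P.
      by exists x; rewrite inE.
    have sL1 : 1 <= s * L.
      have : s * (12%:R * (s * n)) <= s * L by rewrite ler_wpM2l // ltW.
      rewrite mus in m1; nra.
    have -> : (true%:R : R) = 1 by []. lra.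
  rewrite addr0; apply: lt_le_trans hu _.
  have sL : 0 < s * L by rewrite mulr_gt0 // (lt_le_trans ltr01).
  nra.
- have nb' : ~~ inc x vl v0 by rewrite -C0E.
  have := card_bad_le (bad_sub vl sg isy up uq pq) nb'.
  move: nI2; rewrite inE => /negbTE ->; rewrite addn0 -(ler_nat R) => h.
  apply: le_lt_trans h _.
  by move: gl; rewrite /gamma_good /gamma_bad -ltNge.
- by move: nCl; rewrite inE.
Qed.
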